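(* For every integer $k\ge 1$, there is a protocol solving MEQ-AD$(3,2^k)$ in which every transmitted symbol is a single bit and the total number of transmitted bits is $3\lceil \lceil k\log_6 2\rceil \log_2 3\rceil$; this number is less than $1.840k+7.755$.
   Context: There are $n$ nodes labeled $1,\dots,n$ (here $n=3$); node $i$ privately holds an input $x_i\in\{1,\dots,M\}$ (here $M=2^k$). Communication is over private point-to-point links of a fully connected synchronous network. A deterministic protocol $P$ is a fixed finite schedule of steps $l=1,\dots,L(P)$; in step $l$ a prescribed node $T_l$ sends to a prescribed node $R_l\neq T_l$ one symbol $f_l(x_{T_l},T_l^+(l))$, where $T_l^+(l)$ is the sequence of symbols $T_l$ has received in steps $1,\dots,l-1$; only $R_l$ receives it. At the end each node $i$ outputs a bit $EQ_i$ depending on $x_i$ and the symbols it received. $P$ solves MEQ-AD$(n,M)$ if for every input, $EQ_1=\cdots=EQ_n=0$ iff $x_1=\cdots=x_n$. *)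

(* Defs.v *)
From Stdlib Require Import Reals ZArith.
From mathcomp Require Import all_boot.

Set Implicit Arguments.
Unset Strict Implicit.
Unset Printing Implicit Defensive.

(* Nodes 1,2,3 are represented by the ordinals 0,1,2 of 'I_3. *)
Definition node := 'I_3.

(* One step of a deterministic protocol with single-bit symbols:
   sender T_l, receiver R_l, and the symbol function
   f_l(x_{T_l}, T_l^+(l)), where T_l^+(l) is the sequence of symbols
   received by T_l in steps 1..l-1 (in order). *)
Record step := Step {
  sender   : node;
  receiver : node;
  symb     : nat -> seq bool -> bool
}.

(* A protocol: a finite schedule of steps plus the output functions
   EQ_i(x_i, received symbols).  EQ_i = 0 is encoded as [false]. *)
Record protocol := Protocol {
  steps  : seq step;
  output : node -> nat -> seq bool -> bool
}.

Definition plen (P : protocol) : nat := size (steps P).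

Definition wf_protocol (P : protocol) : Prop :=
  all (fun s => sender s != receiver s) (steps P).

Fixpoint run (s : seq step) (x : node -> nat) (recv : node -> seq bool)
  : node -> seq bool :=
  match s with
  | [::] => recv
  | st :: s' =>
      let b := symb st (x (sender st)) (recv (sender st)) in
      run s' x (fun i => if i == receiver st then rcons (recv i) b else recv i)
  end.

Definition received (P : protocol) (x : node -> nat) : node -> seq bool :=
  run (steps P) x (fun _ => [::]).

Definition EQ (P : protocol) (x : node -> nat) (i : node) : bool :=
  output P i (x i) (received P x i).

Definition solves_MEQ_AD3 (M : nat) (P : protocol) : Prop :=
  forall x : node -> nat,
    (forall i, 1 <= x i <= M) ->
    ((forall i, EQ P x i = false) <->
     (forall i j, x i = x j)).

(* Real ceiling: Rceil r = smallest integer >= r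
   (up r is the unique integer z with r < z <= r + 1). *)
Definition Rceil (r : R) : Z := Z.opp (Z.sub (up (Ropp r)) 1).

Definition Rlogb (b a : R) : R := Rdiv (ln a) (ln b).

Definition bitcount (k : nat) : nat :=
  3 * Z.to_nat (Rceil (Rmult (IZR (Rceil (Rmult (INR k) (Rlogb 6 2)))) (Rlogb 2 3))).

(* Main.v *)
Require Import Defs.
From Stdlib Require Import Reals ZArith.
From Stdlib Require Import Lra Lia.
From mathcomp Require Import all_boot.
From mathcomp Require Import zify.

Definition ptab : seq (seq nat) :=
  [:: [::0;1;2]; [::0;2;1]; [::1;0;2]; [::1;2;0]; [::2;0;1]; [::2;1;0]].
Definition pi (j d : nat) : nat := nth 0 (nth [::] ptab d) j.

Lemma pi_lt3 j d : pi j d < 3.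
Proof.
rewrite /pi /ptab.
case: d => [|[|[|[|[|[|d]]]]]] /=.
all: case: j => [|[|[|j]]].
all: rewrite /= ?nth_nil //.
Qed.

Lemma pi_key d1 d2 d3 : d1 < 6 -> d2 < 6 -> d3 < 6 ->
  pi 0 d1 = pi 0 d2 -> pi 1 d2 = pi 1 d3 -> pi 2 d3 = pi 2 d1 ->
  d1 = d2 /\ d2 = d3.
Proof.
have H : all (fun a => all (fun b => all (fun c =>
   [&& pi 0 a == pi 0 b, pi 1 b == pi 1 c & pi 2 c == pi 2 a] ==> (a == b) && (b == c))
   (iota 0 6)) (iota 0 6)) (iota 0 6).
  by vm_compute.
move=> h1 h2 h3 e1 e2 e3.
have m1 : d1 \in iota 0 6 by rewrite mem_iota.
have m2 : d2 \in iota 0 6 by rewrite mem_iota.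
have m3 : d3 \in iota 0 6 by rewrite mem_iota.
move/allP: H => /(_ _ m1) /allP /(_ _ m2) /allP /(_ _ m3).
rewrite e1 e2 e3 !eqxx /= => /andP[/eqP -> /eqP ->]. by [].
Qed.

Fixpoint fenc (j m n : nat) : nat :=
  match m with 0 => 0 | m'.+1 => pi j (n %% 6) + 3 * fenc j m' (n %/ 6) end.

Lemma fenc_lt j m n : fenc j m n < 3 ^ m.
Proof.
elim: m n => [|m IH] n /=; first by [].
have := pi_lt3 j (n %% 6); have := IH (n %/ 6); rewrite expnS; lia.
Qed.

Lemma split3 a b x y : a < 3 -> b < 3 -> a + 3 * x = b + 3 * y -> a = b /\ x = y.
Proof. lia. Qed.

Lemma fenc_key m n1 n2 n3 : n1 < 6 ^ m -> n2 < 6 ^ m -> n3 < 6 ^ m ->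
  fenc 0 m n1 = fenc 0 m n2 -> fenc 1 m n2 = fenc 1 m n3 -> fenc 2 m n3 = fenc 2 m n1 ->
  n1 = n2 /\ n2 = n3.
Proof.
elim: m n1 n2 n3 => [|m IH] n1 n2 n3.
  rewrite expn0 => h1 h2 h3; lia.
rewrite expnS /= => h1 h2 h3 e1 e2 e3.
case: (@split3 _ _ _ _ (pi_lt3 _ _) (pi_lt3 _ _) e1) => a1 b1.
case: (@split3 _ _ _ _ (pi_lt3 _ _) (pi_lt3 _ _) e2) => a2 b2.
case: (@split3 _ _ _ _ (pi_lt3 _ _) (pi_lt3 _ _) e3) => a3 b3.
have [q1 q2] : n1 %/ 6 = n2 %/ 6 /\ n2 %/ 6 = n3 %/ 6.
  by apply: IH => //; lia.
have [r1 r2] : n1 %% 6 = n2 %% 6 /\ n2 %% 6 = n3 %% 6.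
  by apply: pi_key => //; apply: ltn_pmod.
rewrite (divn_eq n1 6) (divn_eq n2 6) (divn_eq n3 6). lia.
Qed.

Fixpoint bits (L v : nat) : seq bool :=
  match L with 0 => [::] | L'.+1 => odd v :: bits L' (v %/ 2) end.

Lemma size_bits L v : size (bits L v) = L.
Proof. by elim: L v => [|L IH] v //=; rewrite IH. Qed.

Lemma bits_inj L v w : v < 2 ^ L -> w < 2 ^ L -> bits L v = bits L w -> v = w.
Proof.
elim: L v w => [|L IH] v w; first by rewrite expn0; lia.
rewrite expnS /= => hv hw [eo eb].
have e : v %/ 2 = w %/ 2 by apply: IH => //; lia.
rewrite (divn_eq v 2) (divn_eq w 2) !modn2 eo e. by [].
Qed.

Lemma run_cat s1 s2 x recv : run (s1 ++ s2) x recv = run s2 x (run s1 x recv).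
Proof. by elim: s1 recv => [|st s1 IH] recv //=. Qed.

Lemma run_map (a b : node) (g : nat -> nat -> bool) s x recv i :
  run (map (fun l => Step a b (fun y _ => g y l)) s) x recv i =
  if i == b then recv i ++ map (g (x a)) s else recv i.
Proof.
elim: s recv => [|l s IH] recv /=; first by rewrite cats0; case: ifP.
by rewrite IH; case: (i == b) => //; rewrite cat_rcons.
Qed.

Definition n0 : node := @Ordinal 3 0 isT.
Definition n1 : node := @Ordinal 3 1 isT.
Definition n2 : node := @Ordinal 3 2 isT.

Definition code (m L j y : nat) : seq bool := bits L (fenc j m (y - 1)).

Definition block (m L j : nat) (a b : node) : seq step :=
  map (fun l => Step a b (fun y _ => nth false (code m L j y) l)) (iota 0 L).

Definition proto (m L : nat) : protocol :=
  Protocol (block m L 0 n0 n1 ++ block m L 1 n1 n2 ++ block m L 2 n2 n0)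
           (fun i y r => r != code m L ((i + 2) %% 3) y).

Lemma map_code m L j y : map (fun l => nth false (code m L j y) l) (iota 0 L) = code m L j y.
Proof.
have := mkseq_nth false (code m L j y). by rewrite /code size_bits.
Qed.

Lemma received_proto m L x :
  [/\ received (proto m L) x n1 = code m L 0 (x n0),
      received (proto m L) x n2 = code m L 1 (x n1) &
      received (proto m L) x n0 = code m L 2 (x n2)].
Proof.
rewrite /received /= !run_cat /block !run_map !map_code /=.
by [].
Qed.

Lemma wf_proto m L : wf_protocol (proto m L).
Proof.
rewrite /wf_protocol /= !all_cat /block !all_map.
by apply/and3P; split; apply/allP.
Qed.

Lemma plen_proto m L : plen (proto m L) = 3 * L.
Proof. rewrite /plen /= !size_cat /block !size_map size_iota. lia. Qed.

Lemma solves_proto k m L : 2 ^ k <= 6 ^ m -> 3 ^ m <= 2 ^ L ->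
  solves_MEQ_AD3 (2 ^ k) (proto m L).
Proof.
move=> hk hm x hx.
have lt6 : forall i, x i - 1 < 6 ^ m.
  move=> i; have := hx i; lia.
have ltf : forall j i, fenc j m (x i - 1) < 2 ^ L.
  move=> j i; have := fenc_lt j m (x i - 1); lia.
have [r1 r2 r0] := received_proto m L x.
have all3 : forall i : node, i = n0 \/ i = n1 \/ i = n2.
  move=> [[|[|[|i]]] hi]; [left|right;left|right;right|by []]; exact: val_inj.
split.
- move=> H.
  have E1 := H n1; have E2 := H n2; have E0 := H n0.
  rewrite /EQ /= in E1 E2 E0.
  rewrite r1 in E1; rewrite r2 in E2; rewrite r0 in E0.
  move/negbFE/eqP: E1 => E1; move/negbFE/eqP: E2 => E2; move/negbFE/eqP: E0 => E0.
  have f1 := @bits_inj _ _ _ (ltf _ _) (ltf _ _) E1.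
  have f2 := @bits_inj _ _ _ (ltf _ _) (ltf _ _) E2.
  have f0 := @bits_inj _ _ _ (ltf _ _) (ltf _ _) E0.
  have [a b] := @fenc_key _ _ _ _ (lt6 n0) (lt6 n1) (lt6 n2) f1 f2 f0.
  have p0 := hx n0; have p1 := hx n1; have p2 := hx n2.
  have c01 : x n0 = x n1 by lia.
  have c12 : x n1 = x n2 by lia.
  move=> i j; case: (all3 i) => [->|[->|->]]; case: (all3 j) => [->|[->|->]]; congruence.
- move=> H i; rewrite /EQ.
  case: (all3 i) => [->|[->|->]]; rewrite ?r0 ?r1 ?r2 /=.
  all: by rewrite ?(H n0 n1) ?(H n1 n2) ?(H n2 n0) eqxx.
Qed.
Section RealPart.
Local Open Scope R_scope.


Lemma Rceil_spec r : r <= IZR (Rceil r) < r + 1.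
Proof. unfold Rceil. destruct (archimed (- r)) as [H1 H2]. rewrite opp_IZR minus_IZR. lra. Qed.

Lemma Rceil_nat r : 0 <= r -> IZR (Rceil r) = INR (Z.to_nat (Rceil r)).
Proof.
intro h. destruct (Rceil_spec r) as [a b].
assert (0 <= Rceil r)%Z by (apply le_IZR; lra).
rewrite INR_IZR_INZ Z2Nat.id; auto.
Qed.

Lemma INR_expn b n : INR (b ^ n)%N = INR b ^ n.
Proof.
induction n as [|n IH]; first by rewrite expn0.
rewrite expnS -multE mult_INR IH. simpl. reflexivity.
Qed.

Lemma ln2_pos : 0 < ln 2.
Proof. rewrite <- ln_1. apply ln_increasing; lra. Qed.
Lemma ln3_pos : 0 < ln 3.
Proof. rewrite <- ln_1. apply ln_increasing; lra. Qed.
Lemma ln6_eq : ln 6 = ln 2 + ln 3.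
Proof. rewrite <- ln_mult; try lra. f_equal; lra. Qed.

Lemma ln3_bound : 200 * ln 3 < 317 * ln 2.
Proof.
assert (H : 3 ^ 200 < 2 ^ 317).
{ rewrite !pow_IZR. apply IZR_lt. vm_compute. reflexivity. }
apply ln_increasing in H; [|apply pow_lt; lra].
rewrite !ln_pow in H; try lra.
rewrite !INR_IZR_INZ in H. exact H.
Qed.

Lemma pow_le_from_ln (a b p q : nat) : (0 < a)%N -> (0 < b)%N ->
  INR p * ln (INR a) <= INR q * ln (INR b) -> (a ^ p <= b ^ q)%N.
Proof.
move=> ha hb h.
have ha' : 0 < INR a by apply: lt_0_INR; apply/ltP.
have hb' : 0 < INR b by apply: lt_0_INR; apply/ltP.
apply/leP; apply: INR_le; rewrite !INR_expn.
apply: Rnot_lt_le => c.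
apply ln_increasing in c; last by apply: pow_lt.
rewrite !ln_pow in c; lra.
Qed.

Lemma real_part (k : nat) :
  let m := Z.to_nat (Rceil (INR k * Rlogb 6 2)) in
  let L := Z.to_nat (Rceil (IZR (Rceil (INR k * Rlogb 6 2)) * Rlogb 2 3)) in
  [/\ (2 ^ k <= 6 ^ m)%N, (3 ^ m <= 2 ^ L)%N, bitcount k = (3 * L)%N &
      INR (bitcount k) < 1.840 * INR k + 7.755].
Proof.
intros m L.
pose a := ln 2. pose b := ln 3.
have ha : 0 < a := ln2_pos.
have hb : 0 < b := ln3_pos.
have h6 : ln 6 = a + b := ln6_eq.
have hab := ln3_bound. rewrite -/a -/b in hab.
have hK : 0 <= INR k := pos_INR k.
have c_eq : Rlogb 6 2 = a / (a + b) by rewrite /Rlogb h6.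
have d_eq : Rlogb 2 3 = b / a by [].
have hc : 0 <= Rlogb 6 2.
  rewrite c_eq; apply: Rlt_le; apply: Rdiv_lt_0_compat; lra.
have hd : 0 < Rlogb 2 3 by rewrite d_eq; apply: Rdiv_lt_0_compat.
have r1 : 0 <= INR k * Rlogb 6 2 by apply: Rmult_le_pos.
have eM := @Rceil_nat _ r1.
have [s1 s1'] := Rceil_spec (INR k * Rlogb 6 2).
rewrite -/m in eM.
rewrite eM in s1 s1'.
have r2 : 0 <= IZR (Rceil (INR k * Rlogb 6 2)) * Rlogb 2 3.
  apply: Rmult_le_pos; lra.
have eL := @Rceil_nat _ r2.
rewrite -/L in eL.
have [s2 s2'] := Rceil_spec (IZR (Rceil (INR k * Rlogb 6 2)) * Rlogb 2 3).
rewrite eL eM in s2 s2'.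
rewrite c_eq in s1 s1'. rewrite d_eq in s2 s2'.
have bc : bitcount k = (3 * L)%N by [].
split => //.
- apply: pow_le_from_ln => //.
  rewrite !INR_IZR_INZ.
  change (IZR (Z.of_nat 2)) with 2. change (IZR (Z.of_nat 6)) with 6.
  rewrite -!INR_IZR_INZ h6 -/a -/b.
  have -> : INR k * a = (INR k * (a / (a + b))) * (a + b) by field; lra.
  apply: Rmult_le_compat_r; lra.
- apply: pow_le_from_ln => //.
  rewrite !INR_IZR_INZ.
  change (IZR (Z.of_nat 2)) with 2. change (IZR (Z.of_nat 3)) with 3.
  rewrite -!INR_IZR_INZ -/a -/b.
  have -> : INR m * b = (INR m * (b / a)) * a by field; lra.
  apply: Rmult_le_compat_r; lra.
- rewrite bc -multE mult_INR.
  have hu : b / a < 1.585.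
    apply: (Rmult_lt_reg_r a) => //.
    have -> : b / a * a = b by field; lra.
    lra.
  have hv : b / (a + b) <= 0.6133.
    apply: (Rmult_le_reg_r (a + b)); first lra.
    have -> : b / (a + b) * (a + b) = b by field; lra.
    lra.
  have e1 : INR m * (b / a) < (INR k * (a / (a + b)) + 1) * (b / a).
    apply: Rmult_lt_compat_r; [apply: Rdiv_lt_0_compat; lra | lra].
  have e2 : (INR k * (a / (a + b)) + 1) * (b / a) = INR k * (b / (a + b)) + b / a.
    field; lra.
  have e3 : INR k * (b / (a + b)) <= INR k * 0.6133.
    by apply: Rmult_le_compat_l.
  rewrite (INR_IZR_INZ 3) /=. lra.
Qed.

End RealPart.

Theorem mainTheorem11 :
  forall k : nat, 1 <= k ->
    (exists P : protocol,
        wf_protocol P /\ solves_MEQ_AD3 (2 ^ k) P /\ plen P = bitcount k)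
    /\ Rlt (INR (bitcount k)) (Rplus (Rmult 1.840 (INR k)) 7.755).
Proof.
move=> k _.
have [h1 h2 h3 h4] := real_part k.
split => //.
exists (proto (Z.to_nat (Rceil (INR k * Rlogb 6 2)))
  (Z.to_nat (Rceil (IZR (Rceil (INR k * Rlogb 6 2)) * Rlogb 2 3)))).
split; first exact: wf_proto.
split.
  exact: (@solves_proto _ _ _ h1 h2).
by rewrite plen_proto h3.
Qed.
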